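(* For every $N\ge 2$, the median distance $Md_N$ and the average distance $\bar d_N=\frac{N+1}{3}$ of the path (chain) on $N$ nodes satisfy $Md_N\le \bar d_N$, with equality if and only if $N\in\{2,5,8,11\}$.
   Context: The path on $N$ nodes has exactly $N-j$ unordered pairs of nodes at (shortest-path) distance $j$, $j=1,\dots,N-1$. The median distance is the median of the multiset of these $N(N-1)/2$ distances (the average of the two middle values if this number is even); the average distance is the arithmetic mean of that multiset. *)

(* Defs.v *)
From mathcomp Require Import all_boot all_order all_algebra.
Set Implicit Arguments. Unset Strict Implicit. Unset Printing Implicit Defensive.
Import Order.TTheory GRing.Theory Num.Theory.
Local Open Scope ring_scope.

(* Multiset of shortest-path distances over unordered pairs {i,j}, i<j, of
   nodes 0..N-1 of the path P_N (distance |i-j| = j - i). *)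
Definition path_dists (N : nat) : seq nat :=
  flatten [seq [seq (j - i)%N | j <- iota 0 N & (i < j)%N] | i <- iota 0 N].

Definition median (s : seq nat) : rat :=
  let t := sort leq s in
  let M := size t in
  if odd M then (nth 0%N t M./2)%:R
  else ((nth 0%N t M./2.-1)%:R + (nth 0%N t M./2)%:R) / 2.

Definition mean (s : seq nat) : rat := (sumn s)%:R / (size s)%:R.

Definition median_distance (N : nat) : rat := median (path_dists N).
Definition average_distance (N : nat) : rat := mean (path_dists N).

(* Main.v *)
Require Import Defs.
From mathcomp Require Import all_boot all_order all_algebra.
From mathcomp Require Import zify.
Import Order.TTheory GRing.Theory Num.Theory.
Local Open Scope ring_scope.

Lemma rows N : path_dists N = flatten [seq iota 1 (N - i.+1) | i <- iota 0 N].
Proof.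
rewrite /path_dists; congr flatten; apply/eq_in_map => i; rewrite mem_iota.
move=> /andP [_ hi].
have -> : N = (i.+1 + (N - i.+1))%N by lia.
rewrite iotaD filter_cat.
have -> : [seq x <- iota 0 i.+1 | (i < x)%N] = [::].
  apply/eqP; rewrite -size_eq0 size_filter; apply/eqP/eqP.
  rewrite -leqn0 leqNgt -has_count; apply/hasPn => x; rewrite mem_iota; lia.
rewrite /= (@eq_in_filter _ _ predT); last by move=> x; rewrite mem_iota /= => /andP [h _]; apply/idP; lia.
rewrite filter_predT add0n.
have -> : (i.+1 + (N - i.+1) - i.+1 = N - i.+1)%N by lia.
elim: (N - i.+1)%N => [|n IH] //.
rewrite -[n.+1]addn1 !iotaD map_cat IH /=; congr (_ ++ [:: _]); lia.
Qed.

Definition T (g : nat -> nat) N := sumn [seq g (N - i.+1)%N | i <- iota 0 N].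

Lemma TS g N : T g N.+1 = (g N + T g N)%N.
Proof.
rewrite /T; have -> : iota 0 N.+1 = 0%N :: map S (iota 0 N).
  by rewrite -(iotaDl 1 0).
by rewrite /= subn1 /= -map_comp.
Qed.

Lemma size_pd N : (2 * size (path_dists N) = N * (N - 1))%N.
Proof.
rewrite rows size_flatten /shape -map_comp.
rewrite (eq_map (g := fun i => (N - i.+1)%N)); last by move=> i /=; rewrite size_iota.
change (2 * T id N = N * (N - 1))%N.
elim: N => [|N IH] //; rewrite TS /=; nia.
Qed.

Lemma sumn_iota1 m : (2 * sumn (iota 1 m) = m * m.+1)%N.
Proof.
elim: m => [|m IH] //; rewrite -[m.+1]addn1 iotaD sumn_cat /=; nia.
Qed.

Lemma sum_pd N : (6 * sumn (path_dists N) = (N - 1) * N * N.+1)%N.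
Proof.
rewrite rows sumn_flatten -map_comp.
change (6 * T (fun m => sumn (iota 1 m)) N = (N - 1) * N * N.+1)%N.
elim: N => [|N IH] //; rewrite TS mulnDr IH.
have := sumn_iota1 N; nia.
Qed.

Lemma count_iota1 D m : count (fun x => x <= D)%N (iota 1 m) = minn D m.
Proof.
elim: m => [|m IH]; first by rewrite minn0.
rewrite -[m.+1]addn1 iotaD count_cat IH /=; lia.
Qed.

Lemma count_pd N D : (D <= N)%N ->
  (2 * count (fun x => x <= D)%N (path_dists N) = D * (D - 1) + 2 * D * (N - D))%N.
Proof.
rewrite rows count_flatten -map_comp.
rewrite (eq_map (g := fun i => minn D (N - i.+1))); last by move=> i /=; rewrite count_iota1.
change ((D <= N)%N -> 2 * T (fun m => minn D m) N = D * (D - 1) + 2 * D * (N - D))%N.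
suff H : forall N, (2 * T (fun m => minn D m) N =
   if (N <= D)%N then N * (N - 1) else D * (D - 1) + 2 * D * (N - D))%N.
  move=> hD; rewrite H; case: leqP => h //; have -> : N = D by lia. lia.
elim => [|n IH] //; rewrite TS mulnDr IH.
case: (leqP n D) => h1; case: (leqP n.+1 D) => h2; try nia.


Qed.

Lemma sorted_nth_le (t : seq nat) k D : sorted leq t ->
  (k < count (fun x => x <= D) t)%N -> (nth 0 t k <= D)%N.
Proof.
move=> st; apply: contraTT; rewrite -ltnNge => hD; rewrite -leqNgt.
case: (leqP (size t) k) => hk; first by apply: leq_trans (count_size _ _) hk.
rewrite -(cat_take_drop k t) count_cat.
have -> : count (fun x => x <= D)%N (drop k t) = 0%N.
  apply/eqP; rewrite -leqn0 leqNgt -has_count; apply/hasPn => x /(nthP 0) [j].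
  rewrite size_drop nth_drop ltn_subRL => hj <-; rewrite -ltnNge.
  apply: leq_trans hD _; apply: (sorted_leq_nth leq_trans leqnn) => //;
   first [exact: hk | exact: hj | exact: leq_addr].
suff: (count (fun x => x <= D)%N (take k t) <= k)%N by rewrite addn0.
apply: leq_trans (count_size _ _) _; rewrite size_takel; lia.
Qed.

Lemma avg N : (2 <= N)%N -> average_distance N = (N.+1)%:R / 3.
Proof.
move=> hN; rewrite /average_distance /mean.
have h1 := size_pd N; have h2 := sum_pd N.
apply/eqP; rewrite eqr_div ?pnatr_eq0 //; last by apply/eqP; nia.
rewrite -!natrM eqr_nat; apply/eqP; nia.
Qed.

Lemma large N : (14 <= N)%N -> median_distance N < average_distance N.
Proof.
move=> hN; rewrite avg; last by lia.
set E := (N %/ 3)%N.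
have hE : (E <= N)%N by rewrite /E leq_div.
have hc := @count_pd N E hE.
have hs := size_pd N.
set t := sort leq (path_dists N).
have st : sorted leq t by apply: sort_sorted; exact: leq_total.
have hp : perm_eq t (path_dists N) by rewrite /t perm_sort.
have hct : count (fun x => x <= E)%N t = count (fun x => x <= E)%N (path_dists N)
  by apply/permP.
have hsz : size t = size (path_dists N) by rewrite size_sort.
have key : ((size t)./2 < count (fun x => x <= E)%N t)%N.
  rewrite hct hsz.
  have hm : (N = 3 * E + N %% 3)%N by rewrite /E {1}(divn_eq N 3); lia.
  have hr : (N %% 3 < 3)%N by rewrite ltn_mod.
  move: hc hs hm hr; set c := count _ _; set M := size _; set r := (N %% 3)%N.
  move=> hc hs hm hr.
  have -> : M./2 = (M %/ 2)%N by rewrite -divn2.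
  have := leq_trunc_div M 2; rewrite -/E.
  nia.
have b1 : (nth 0 t (size t)./2 <= E)%N by apply: sorted_nth_le.
have b2 : (nth 0 t (size t)./2.-1 <= E)%N.
  apply: sorted_nth_le => //; apply: leq_ltn_trans key; exact: leq_pred.
have hE3 : (E%:R : rat) < N.+1%:R / 3.
  rewrite ltr_pdivlMr // -natrM ltr_nat /E; have := divn_eq N 3; lia.
apply: le_lt_trans hE3.
rewrite /median_distance /median -/t.
case: ifP => _; first by rewrite ler_nat.
rewrite ler_pdivrMr // -!natrD -natrM ler_nat; lia.
Qed.

Theorem mainTheorem10 (N : nat) : (2 <= N)%N ->
  average_distance N = (N.+1)%:R / 3 /\
  median_distance N <= average_distance N /\
  (median_distance N = average_distance N <-> N \in [:: 2; 5; 8; 11]%N).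
Proof.
move=> hN; split; first exact: avg.
suff: (median_distance N < average_distance N /\ N \notin [:: 2; 5; 8; 11]%N) \/
      (median_distance N = average_distance N /\ N \in [:: 2; 5; 8; 11]%N).
  case=> [[h1 h2]|[h1 h2]]; split.
  - exact: ltW.
  - split=> [e|]; last by rewrite (negbTE h2).
    by move: h1; rewrite e ltxx.
  - by rewrite h1.
  - by split.
have [h14|hsmall] := leqP 14 N.
  left; split; first exact: large.
  rewrite !inE; apply/negP; lia.
do 14 (case: N hN hsmall => [|N] hN hsmall;
  [ first [ by []
          | by left; split; [vm_compute; reflexivity | by []]
          | by right; split; [apply/eqP; vm_compute; reflexivity | by []] ] | ]).
by [].
Qed.
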